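(* Let $A,B,C$ be an LR triple on $V$ and let $\overline A$ be the set of elements of $\mathrm{End}(V)$ that weakly lower both the $(A,B)$-decomposition and the $(A,C)$-decomposition of $V$. (i) If $A,B,C$ is trivial then $\overline A=0$. (ii) If $A,B,C$ is nonbipartite then $A$ is a basis of $\overline A$, so $\dim\overline A=1$. (iii) If $A,B,C$ is bipartite and nontrivial then $AJ,JA$ form a basis of $\overline A$, so $\dim\overline A=2$, where $J=\sum_{j=0}^{d/2}E_{2j}$.
   Context: Let $V$ be a vector space over a field $\mathbb F$ with $\dim V=d+1$. A decomposition of $V$ is a sequence $(V_i)_{i=0}^d$ of one-dimensional subspaces with $V=\bigoplus V_i$; $X$ lowers it if $XV_i=V_{i-1}$ ($1\le i\le d$), $XV_0=0$; raises it if $XV_i=V_{i+1}$ ($0\le i\le d-1$), $XV_d=0$; $X$ weakly lowers it if $XV_i\subseteq V_{i-1}$ ($1\le i\le d$) and $XV_0=0$. An ordered pair $X,Y$ is an LR pair if some decomposition (unique, the $(X,Y)$-decomposition) is lowered by $X$ and raised by $Y$. An LR triple is $A,B,C\in\mathrm{End}(V)$ such that each ordered pair of distinct elements among $A,B,C$ is an LR pair; it is trivial if $d=0$. Let $E_i,E'_i,E''_i$ be the projections onto the $i$-th components of the $(A,B)$-, $(B,C)$-, $(C,A)$-decompositions. It is bipartite if $\mathrm{tr}(CE_i)=\mathrm{tr}(AE'_i)=\mathrm{tr}(BE''_i)=0$ for all $i$ (then $d$ is even), nonbipartite otherwise. *)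

(* Defs.v *)
(* V = 'rV[F]_(d.+1) (row vectors), End(V) = 'M[F]_(d.+1),
   a matrix X acting by v |-> v *m X; subspaces are row spaces (mxalgebra). *)
From HB Require Import structures.
From mathcomp Require Import all_boot all_order all_algebra.
Set Implicit Arguments. Unset Strict Implicit. Unset Printing Implicit Defensive.
Import GRing.Theory.
Local Open Scope ring_scope.

Definition is_decomp (F : fieldType) (d : nat) (Vs : 'I_d.+1 -> 'M[F]_d.+1) : Prop :=
  (forall i, \rank (Vs i) = 1%N) /\ mxdirect (\sum_i Vs i) /\
  (\sum_i Vs i :=: 1%:M)%MS.

Definition lowers (F : fieldType) (d : nat) (Vs : 'I_d.+1 -> 'M[F]_d.+1)
  (X : 'M[F]_d.+1) : Prop :=
  (forall i : 'I_d.+1, (0 < i)%N -> (Vs i *m X == Vs (inord i.-1))%MS) /\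
  Vs ord0 *m X = 0.

Definition raises (F : fieldType) (d : nat) (Vs : 'I_d.+1 -> 'M[F]_d.+1)
  (X : 'M[F]_d.+1) : Prop :=
  (forall i : 'I_d.+1, (i < d)%N -> (Vs i *m X == Vs (inord i.+1))%MS) /\
  Vs ord_max *m X = 0.

Definition weakly_lowers (F : fieldType) (d : nat) (Vs : 'I_d.+1 -> 'M[F]_d.+1)
  (X : 'M[F]_d.+1) : Prop :=
  (forall i : 'I_d.+1, (0 < i)%N -> (Vs i *m X <= Vs (inord i.-1))%MS) /\
  Vs ord0 *m X = 0.

Definition is_LRdec (F : fieldType) (d : nat) (Vs : 'I_d.+1 -> 'M[F]_d.+1)
  (X Y : 'M[F]_d.+1) : Prop :=
  is_decomp Vs /\ lowers Vs X /\ raises Vs Y.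

Definition LR_pair (F : fieldType) (d : nat) (X Y : 'M[F]_d.+1) : Prop :=
  exists Vs : 'I_d.+1 -> 'M[F]_d.+1, is_LRdec Vs X Y.

Definition LR_triple (F : fieldType) (d : nat) (A B C : 'M[F]_d.+1) : Prop :=
  LR_pair A B /\ LR_pair B A /\ LR_pair B C /\ LR_pair C B /\ LR_pair C A /\ LR_pair A C.

Definition projE (F : fieldType) (d : nat) (Vs : 'I_d.+1 -> 'M[F]_d.+1)
  (i : 'I_d.+1) : 'M[F]_d.+1 :=
  proj_mx (Vs i) (\sum_(j | j != i) Vs j)%MS.

(* bipartite: tr(C E_i) = tr(A E'_i) = tr(B E''_i) = 0 for all i, where
   E, E', E'' are the projections for the (A,B)-, (B,C)-, (C,A)-decompositions
   (these decompositions are unique, so quantifying over them is harmless). *)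
Definition bipartite (F : fieldType) (d : nat) (A B C : 'M[F]_d.+1) : Prop :=
  forall Vs Vs' Vs'' : 'I_d.+1 -> 'M[F]_d.+1,
    is_LRdec Vs A B -> is_LRdec Vs' B C -> is_LRdec Vs'' C A ->
    forall i : 'I_d.+1,
      [/\ \tr (C *m projE Vs i) = 0, \tr (A *m projE Vs' i) = 0
        & \tr (B *m projE Vs'' i) = 0].

Definition Abar (F : fieldType) (d : nat) (VAB VAC : 'I_d.+1 -> 'M[F]_d.+1)
  (X : 'M[F]_d.+1) : Prop :=
  weakly_lowers VAB X /\ weakly_lowers VAC X.

(* Main.v *)
Require Import Defs.
From HB Require Import structures.
From mathcomp Require Import all_boot all_order all_algebra.
From mathcomp Require Import zify.
Set Implicit Arguments. Unset Strict Implicit. Unset Printing Implicit Defensive.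
Import GRing.Theory.
Local Open Scope ring_scope.
Section Gen.
Variables (F : fieldType) (d : nat).
Local Notation n := d.+1.
Variables (Vs : 'I_n -> 'M[F]_n) (A : 'M[F]_n) (g : 'rV[F]_n).
Hypotheses (dec : is_decomp Vs) (low : lowers Vs A) (gsub : (g <= Vs ord_max)%MS)
  (gnz : g != 0).

Definition u k := g *m A ^+ k.

Lemma uS k : u k.+1 = u k *m A.
Proof. by rewrite /u exprSr mulmxA. Qed.

Lemma uD k j : u (k + j) = u k *m A ^+ j.
Proof. by rewrite /u exprD mulmxA. Qed.

Lemma rank1_eqmx m (y : 'rV[F]_n) (M : 'M[F]_(m, n)) :
  y != 0 -> \rank M = 1%N -> (y <= M)%MS -> (y :=: M)%MS.
Proof.
move=> ynz rM yM; apply/eqmxP; rewrite -(mxrank_leqif_eq yM) rM rank_rV ynz.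
by [].
Qed.


Lemma inordE (k : nat) : (k <= d)%N -> nat_of_ord (inord k : 'I_n) = k.
Proof. by move=> h; rewrite inordK. Qed.

Lemma G1 k : (k <= d)%N -> (u k :=: Vs (inord (d - k)))%MS.
Proof.
elim: k => [|k IH] hk.
  rewrite subn0 /u expr0 mulmx1.
  have -> : (inord d : 'I_n) = ord_max by apply/val_inj; rewrite /= inordK.
  by apply: rank1_eqmx => //; case: dec.
have hk' : (k <= d)%N by lia.
rewrite uS; apply: eqmx_trans (eqmxMr _ (IH hk')) _.
have hpos : (0 < (inord (d - k) : 'I_n))%N by rewrite inordK; lia.
have /eqmxP E := low.1 _ hpos; apply: eqmx_trans E _.
have -> : (inord (inord (d - k) : 'I_n).-1 : 'I_n) = inord (d - k.+1).
  by apply/val_inj; rewrite /= !inordK; lia.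
exact: eqmx_refl.
Qed.

Lemma rankVs i : \rank (Vs i) = 1%N.
Proof. by case: dec. Qed.

Lemma u_nz k : (k <= d)%N -> u k != 0.
Proof. by move=> hk; rewrite -mxrank_eq0 (G1 hk) rankVs. Qed.

Lemma u_sub k : (k <= d)%N -> (u k <= Vs (inord (d - k)))%MS.
Proof. by move=> hk; rewrite (G1 hk). Qed.

Lemma u_big k : (d < k)%N -> u k = 0.
Proof.
move=> hk.
have h0 : u d.+1 = 0.
  rewrite uS; have := u_sub (leqnn d); rewrite subnn.
  have -> : (inord 0 : 'I_n) = ord0 by apply/val_inj; rewrite /= inordK.
  by case/submxP=> D ->; rewrite -mulmxA low.2 mulmx0.
have -> : k = (d.+1 + (k - d.+1))%N by lia.
by rewrite uD h0 mul0mx.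
Qed.

Definition Pm : 'M[F]_n := \matrix_(i < n) u i.

Lemma row_Pm (i : 'I_n) : row i Pm = u i.
Proof. by rewrite rowK. Qed.

Lemma Pm_full : row_full Pm.
Proof.
rewrite -sub1mx.
case: dec => _ [_ /eqmxP/andP [_ h]].
apply: submx_trans h _; apply/sumsmx_subP => i _.
have hi : (d - i <= d)%N by lia.
have hi' := ltn_ord i.
have -> : i = inord (d - (d - i)) by apply/val_inj; rewrite /= inordE; lia.
rewrite -(G1 hi).
have := row_sub (inord (d - i)) Pm; rewrite row_Pm inordE //; lia.
Qed.

Lemma Pm_unit : Pm \in unitmx.
Proof. by rewrite -row_full_unit Pm_full. Qed.

Definition coord (r : 'rV[F]_n) (m : nat) : F :=
  if (m < n)%N then (r *m invmx Pm) 0 (inord m) else 0.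

Lemma sum_rowE (c : 'rV[F]_n) : c *m Pm = \sum_(m < n) c 0 m *: u m.
Proof. by rewrite mulmx_sum_row; apply: eq_bigr => i _; rewrite row_Pm. Qed.

Lemma coordE (r : 'rV[F]_n) : r = \sum_(m < n) coord r m *: u m.
Proof.
rewrite -{1}(mulmxKV Pm_unit r) sum_rowE; apply: eq_bigr => i _.
by rewrite /coord ltn_ord inord_val.
Qed.

Lemma L0 (c : nat -> F) :
  \sum_(m < n) c m *: u m = 0 -> forall m, (m < n)%N -> c m = 0.
Proof.
move=> h m hm.
have : (\row_(i < n) c i) *m Pm = 0.
  by rewrite sum_rowE -[RHS]h; apply: eq_bigr => i _; rewrite mxE.
move=> /(congr1 (mulmx^~ (invmx Pm))); rewrite mulmxK ?Pm_unit // mul0mx.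
by move/rowP/(_ (Ordinal hm)); rewrite !mxE.
Qed.

Lemma L0eq (c c' : nat -> F) :
  \sum_(m < n) c m *: u m = \sum_(m < n) c' m *: u m ->
  forall m, (m < n)%N -> c m = c' m.
Proof.
move=> h m hm; apply/eqP; rewrite -subr_eq0; apply/eqP; move: m hm.
apply: (L0 (c := fun m => c m - c' m)).
rewrite (eq_bigr (fun i : 'I_n => c i *: u i - c' i *: u i)); last first.
  by move=> i _; rewrite scalerBl.
by rewrite sumrB h subrr.
Qed.

Lemma G6 (M M' : 'M[F]_n) :
  (forall k, (k < n)%N -> u k *m M = u k *m M') -> M = M'.
Proof.
move=> h.
have : Pm *m M = Pm *m M'.
  by apply/row_matrixP => i; rewrite !row_mul row_Pm h.
by move/(congr1 (mulmx (invmx Pm))); rewrite !mulKmx ?Pm_unit.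
Qed.

Lemma shift1 (f : nat -> F) :
  \sum_(m < n) f m *: u m.+1 =
  \sum_(m < n) (if (m : nat) is m'.+1 then f m' else 0) *: u m.
Proof.
rewrite big_ord_recr /= (u_big (ltnSn d)) scaler0 addr0.
rewrite big_ord_recl /= scale0r add0r.
by apply: eq_bigr => i _.
Qed.

Lemma shiftj (c : nat -> F) s :
  \sum_(m < n) c m *: u (m + s) =
  \sum_(m < n) (if (s <= m)%N then c (m - s)%N else 0) *: u m.
Proof.
elim: s c => [|s IH] c.
  by apply: eq_bigr => i _; rewrite addn0 subn0.
have -> : \sum_(m < n) c m *: u (m + s.+1) =
    (\sum_(m < n) c m *: u (m + s)) *m A.
  rewrite mulmx_suml; apply: eq_bigr => i _.
  by rewrite -scalemxAl addnS uS.
rewrite IH mulmx_suml.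
have -> : \sum_(i < n) ((if (s <= i)%N then c (i - s)%N else 0) *: u i) *m A =
   \sum_(i < n) (if (s <= i)%N then c (i - s)%N else 0) *: u i.+1.
  by apply: eq_bigr => i _; rewrite -scalemxAl uS.
rewrite (shift1 (fun i => if (s <= i)%N then c (i - s)%N else 0)).
apply: eq_bigr => i _; congr (_ *: _).
by case: (nat_of_ord i) => [|m] //=; rewrite ltnS subSS.
Qed.

Lemma Ls (c : nat -> F) s :
  \sum_(m < n) c m *: u (m + s) = 0 -> forall m, (m + s <= d)%N -> c m = 0.
Proof.
rewrite shiftj => /(L0 (c := fun m => if (s <= m)%N then c (m - s)%N else 0)) h m hm.
by have := h (m + s)%N; rewrite ltnS hm leq_addl addnK => ->.
Qed.

Lemma G3 (X : 'M[F]_n) :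
  weakly_lowers Vs X <-> forall k, exists c, u k *m X = c *: u k.+1.
Proof.
split.
  case=> h1 h0 k.
  case: (ltngtP k d) => hk.
  - have hk' : (k <= d)%N by lia.
    have hpos : (0 < (inord (d - k) : 'I_n))%N by rewrite inordE; lia.
    have := h1 _ hpos.
    have -> : (inord (inord (d - k) : 'I_n).-1 : 'I_n) = inord (d - k.+1).
      by apply/val_inj; rewrite /= !inordE; lia.
    move=> H; have : (u k *m X <= u k.+1)%MS by rewrite (G1 hk) (eqmxMr X (G1 hk')).
    by case/sub_rVP => c hc; exists c.
  - by exists 0; rewrite scale0r u_big ?mul0mx.
  - exists 0; rewrite hk (u_big (ltnSn d)) scaler0.
    have := u_sub (leqnn d); rewrite subnn.
    have -> : (inord 0 : 'I_n) = ord0 by apply/val_inj; rewrite /= inordK.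
    by case/submxP=> D ->; rewrite -mulmxA h0 mulmx0.
move=> h; split.
  move=> i hi.
  have hi' := ltn_ord i.
  have hk : (d - i <= d)%N by lia.
  have Ei : i = inord (d - (d - i)) by apply/val_inj; rewrite /= inordE; lia.
  have Ei1 : (inord i.-1 : 'I_n) = inord (d - (d - i).+1).
    by apply/val_inj; rewrite /= !inordE; lia.
  have hk1 : ((d - i).+1 <= d)%N by lia.
  rewrite Ei1 -(G1 hk1) {1}Ei -(eqmxMr X (G1 hk)).
  by have [c ->] := h (d - i)%N; rewrite scalemx_sub.
have := G1 (leqnn d); rewrite subnn.
have -> : (inord 0 : 'I_n) = ord0 by apply/val_inj; rewrite /= inordK.
move=> E; have : (Vs ord0 <= u d)%MS by rewrite E.
case/submxP=> D ->; have [c hc] := h d.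
by rewrite -mulmxA hc (u_big (ltnSn d)) scaler0 mulmx0.
Qed.

Lemma uJ_gen (P : 'M[F]_n) (par : nat -> bool) :
  (forall k, par k.+1 = ~~ par k) ->
  (forall k, u k *m P = if par k then u k else 0) ->
  P *m A = A *m (1%:M - P).
Proof.
move=> hpar hP; apply: G6 => k _.
rewrite !mulmxA hP -uS mulmxBr mulmx1 hP hpar.
by case: (par k) => /=; rewrite ?mul0mx ?subr0 ?subrr -?uS.
Qed.

Lemma uJAB (P : 'M[F]_n) (par : nat -> bool) (a b : F) :
  (forall k, par k.+1 = ~~ par k) ->
  (forall k, u k *m P = if par k then u k else 0) ->
  forall k, u k *m (a *: (A *m P) + b *: (P *m A)) =
            (if par k then b else a) *: u k.+1.
Proof.
move=> hpar hP k.
rewrite mulmxDr -!scalemxAr !mulmxA -uS !hP hpar.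
by case: (par k) => /=; rewrite ?mul0mx ?scaler0 ?add0r ?addr0 // uS.
Qed.

Section Raise.
Variable R : 'M[F]_n.
Hypothesis rai : raises Vs R.

Lemma raise_ex m : exists r : F,
  ((0 < m <= d)%N ==> (r != 0) && (u m *m R == r *: u m.-1)).
Proof.
case hm: (0 < m <= d)%N; last by exists 0.
move/andP: hm => [h1 h2].
have hk : (m <= d)%N by [].
have hk1 : (m.-1 <= d)%N by lia.
have hlt : ((inord (d - m) : 'I_n) < d)%N by rewrite inordE; lia.
have E := rai.1 _ hlt; move/eqmxP: E => E.
have Eidx : (inord (inord (d - m) : 'I_n).+1 : 'I_n) = inord (d - m.-1).
  by apply/val_inj; rewrite /= !inordE; lia.
rewrite Eidx in E.
have E2 : (u m *m R :=: u m.-1)%MS :=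
  eqmx_trans (eqmx_trans (eqmxMr _ (G1 hk)) E) (eqmx_sym (G1 hk1)).
have : (u m *m R <= u m.-1)%MS by rewrite E2.
case/sub_rVP => r hr; exists r; rewrite hr eqxx andbT /=.
apply/eqP => r0; move: hr; rewrite r0 scale0r => hr.
by have := u_nz hk1; rewrite -mxrank_eq0 -E2 hr mxrank0.
Qed.

Definition rr m := xchoose (raise_ex m).

Lemma rrP m : (0 < m <= d)%N -> rr m != 0 /\ u m *m R = rr m *: u m.-1.
Proof.
move=> hm; have := xchooseP (raise_ex m).
by move/implyP/(_ hm)/andP => [h1 /eqP h2].
Qed.

Lemma u0R : u 0 *m R = 0.
Proof.
rewrite /u expr0 mulmx1; case/submxP: gsub => D ->.
by rewrite -mulmxA rai.2 mulmx0.
Qed.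

Lemma raise_coord (c : nat -> F) :
  (\sum_(m < n) c m *: u m) *m R =
  \sum_(m < n) (if (m < d)%N then c m.+1 * rr m.+1 else 0) *: u m.
Proof.
rewrite mulmx_suml big_ord_recl /= -scalemxAl u0R scaler0 add0r.
rewrite [RHS]big_ord_recr /= ltnn scale0r addr0.
apply: eq_bigr => i _; rewrite ltn_ord /= -scalemxAl.
have hi : (0 < (bump 0 i) <= d)%N by rewrite /bump /=; have := ltn_ord i; lia.
by rewrite (rrP hi).2 scalerA.
Qed.

Lemma kerR (x : 'rV[F]_n) : x *m R = 0 -> (x <= u 0)%MS.
Proof.
rewrite {1}(coordE x) raise_coord.
move/(L0 (c := fun m => if (m < d)%N then coord x m.+1 * rr m.+1 else 0)) => h.
have hc : forall m, (0 < m <= d)%N -> coord x m = 0.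
  move=> m hm; have hm1 : (m.-1 < n)%N by lia.
  have := h _ hm1; have -> : (m.-1 < d)%N by lia.
  rewrite prednK; last by lia.
  by move/eqP; rewrite mulf_eq0 (negbTE (rrP hm).1) orbF => /eqP.
rewrite (coordE x) big_ord_recl big1 ?addr0 ?scalemx_sub //.
move=> i _; rewrite hc ?scale0r //.
by rewrite lift0; have := ltn_ord i; lia.
Qed.

Lemma uJR (P : 'M[F]_n) (par : nat -> bool) :
  (forall k, par k.+1 = ~~ par k) ->
  (forall k, u k *m P = if par k then u k else 0) ->
  P *m R = R *m (1%:M - P).
Proof.
move=> hpar hP; apply: G6 => k hk.
rewrite !mulmxA hP.
case: k hk => [|k] hk.
  by rewrite u0R mul0mx; case: (par 0); rewrite ?mul0mx ?u0R.
have hk' : (0 < k.+1 <= d)%N by lia.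
have [_ E] := rrP hk'; rewrite E /= -scalemxAl mulmxBr mulmx1 hP hpar.
by case: (par k) => /=; rewrite ?subr0 ?subrr ?scaler0 ?mul0mx.
Qed.
Lemma kerR_mx (M : 'M[F]_n) : M *m R = 0 -> (M <= u 0)%MS.
Proof.
move=> h; apply/row_subP => i; apply: kerR.
by rewrite -row_mul h; apply/rowP => j; rewrite !mxE.
Qed.
End Raise.

Lemma kerA (x : 'rV[F]_n) : x *m A = 0 -> (x <= u d)%MS.
Proof.
have -> : x *m A = \sum_(m < n) coord x m *: u m.+1.
  rewrite {1}(coordE x) mulmx_suml; apply: eq_bigr => i _.
  by rewrite -scalemxAl uS.
rewrite shift1.
move/(L0 (c := fun m => if m is m'.+1 then coord x m' else 0)) => h.
have hc : forall m, (m < d)%N -> coord x m = 0.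
  by move=> m hm; have := h m.+1; rewrite ltnS => ->.
rewrite (coordE x) big_ord_recr big1 /= ?add0r ?scalemx_sub //.
by move=> i _; rewrite hc ?scale0r.
Qed.
Lemma kerA_mx (M : 'M[F]_n) : M *m A = 0 -> (M <= u d)%MS.
Proof.
move=> h; apply/row_subP => i; apply: kerA.
by rewrite -row_mul h; apply/rowP => j; rewrite !mxE.
Qed.
End Gen.

Section Dec.
Variables (F : fieldType) (d : nat).
Local Notation n := d.+1.
Variables (Y : 'I_n -> 'M[F]_n).
Hypothesis dec : is_decomp Y.

Lemma cap0 i : (Y i :&: (\sum_(j | j != i) Y j) = 0)%MS.
Proof.
case: dec => _ [dx _].
move/mxdirect_sumsP: dx => H; have := H i isT.
by [].
Qed.

Lemma projE_id m (y : 'M[F]_(m, n)) i : (y <= Y i)%MS -> y *m projE Y i = y.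
Proof. by move=> h; rewrite /projE proj_mx_id ?cap0. Qed.

Lemma projE_0 m (y : 'M[F]_(m, n)) i j :
  (y <= Y j)%MS -> j != i -> y *m projE Y i = 0.
Proof.
move=> h ji; rewrite /projE proj_mx_0 ?cap0 //.
exact: (sumsmx_sup j).
Qed.

Lemma Y_nz i : Y i != 0.
Proof. by rewrite -mxrank_eq0; case: dec => ->. Qed.

Lemma trace_lem (M : 'M[F]_n) i (y : 'rV[F]_n) (gam : F) :
  y != 0 -> (y <= Y i)%MS -> y *m M *m projE Y i = gam *: y ->
  \tr (M *m projE Y i) = gam.
Proof.
move=> ynz yY hE.
have rk : \rank (Y i) = 1%N by case: dec.
have Ey : (y :=: Y i)%MS.
  by apply/eqmxP; rewrite -(mxrank_leqif_eq yY) rk rank_rV ynz.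
have : (projE Y i <= y)%MS.
  by rewrite Ey -[projE Y i]mul1mx /projE proj_mx_sub.
case/submxP=> l El.
have yE : y *m projE Y i = y by rewrite projE_id.
rewrite El mulmxA mxtrace_mulC mulmxA trace_mx11.
move: hE; rewrite El mulmxA [y *m M *m l]mx11_scalar mul_scalar_mx => /eqP.
rewrite -subr_eq0 -scalerBl scaler_eq0 (negbTE ynz) orbF subr_eq0 => /eqP.
by move=> <-; rewrite mxE eqxx mulr1n.
Qed.

Lemma pure_prop (R P : 'M[F]_n) (b : bool) :
  (forall i : 'I_n, (i < d)%N -> (Y i *m R == Y (inord i.+1))%MS) ->
  P *m R = R *m (1%:M - P) ->
  Y ord0 *m P = (if b then 0 else Y ord0) ->
  forall i : 'I_n, Y i *m P = (if b (+) odd i then 0 else Y i).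
Proof.
move=> hR hPR h0 i; case: i => i hi.
elim: i hi => [|i IH] hi.
  by rewrite addbF; have -> : Ordinal hi = ord0 by apply/val_inj.
have hi' : (i < n)%N by lia.
have := hR (Ordinal hi') hi => /eqmxP E.
have Ei : Ordinal hi = inord (Ordinal hi').+1 by apply/val_inj; rewrite /= inordK.
have : (Y (Ordinal hi) <= Y (Ordinal hi') *m R)%MS by rewrite Ei E.
case/submxP=> D ->; rewrite [odd _]/= .
have RP : R *m P = R - P *m R by rewrite hPR mulmxBr mulmx1 opprB addrC subrK.
rewrite -!mulmxA RP mulmxBr (mulmxA _ P) IH /=.
rewrite addbN.
by case: (b (+) odd i); rewrite /= ?mul0mx ?subr0 ?subrr ?mulmx0.
Qed.

Lemma trace_zero (M P : 'M[F]_n) (pb : 'I_n -> bool) :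
  (forall j, Y j *m P = (if pb j then 0 else Y j)) ->
  P *m M = M *m (1%:M - P) ->
  forall i, \tr (M *m projE Y i) = 0.
Proof.
move=> hP hPM i.
set y := nz_row (Y i).
have ynz : y != 0 by rewrite nz_row_eq0 Y_nz.
have yY : (y <= Y i)%MS by rewrite nz_row_sub.
apply: (trace_lem (y := y)) => //; rewrite scale0r.
have MP : M *m P = M - P *m M by rewrite hPM mulmxBr mulmx1 opprB addrC subrK.
have yP : y *m P = if pb i then 0 else y.
  by case/submxP: yY => D ->; rewrite -mulmxA hP; case: (pb i); rewrite ?mulmx0.
have : (y *m M <= \sum_j Y j)%MS.
  by case: dec => _ [_ ->]; rewrite submx1.
case/sub_sumsmxP => D hz.
have hzj : forall j, D j *m Y j *m P = if pb j then 0 else D j *m Y j.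
  by move=> j; rewrite -mulmxA hP; case: (pb j); rewrite ?mulmx0.
case hpi : (pb i).
  have zP : y *m M *m P = y *m M.
    by rewrite -mulmxA MP mulmxBr mulmxA yP hpi mul0mx subr0.
  rewrite -zP hz mulmx_suml mulmx_suml big1 // => j _.
  rewrite hzj; case hpj : (pb j); first by rewrite mul0mx.
  by apply: (projE_0 (j := j)); [rewrite submxMl | apply/eqP => ji; rewrite ji hpi in hpj].
have zP : y *m M *m P = 0.
  by rewrite -mulmxA MP mulmxBr mulmxA yP hpi subrr.
have -> : y *m M = y *m M *m (1%:M - P) by rewrite mulmxBr mulmx1 zP subr0.
rewrite hz !mulmx_suml big1 // => j _.
rewrite mulmxBr mulmx1 hzj; case hpj : (pb j); last by rewrite subrr mul0mx.
rewrite subr0; apply: (projE_0 (j := j)); first by rewrite submxMl.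
by apply/eqP => ji; rewrite ji hpi in hpj.
Qed.
End Dec.


Section Main.
Variables (F : fieldType) (d : nat).
Local Notation n := d.+1.
Variables (A B C : 'M[F]_n) (VAB VAC : 'I_n -> 'M[F]_n).
Hypotheses (trip : LR_triple A B C) (hAB : is_LRdec VAB A B) (hAC : is_LRdec VAC A C).

Let decAB := hAB.1.
Let lowAB := hAB.2.1.
Let raiAB := hAB.2.2.
Let decAC := hAC.1.
Let lowAC := hAC.2.1.
Let raiAC := hAC.2.2.

Definition e := nz_row (VAB ord_max).
Definition w := nz_row (VAC ord_max).
Let e_sub : (e <= VAB ord_max)%MS := nz_row_sub _.
Let w_sub : (w <= VAC ord_max)%MS := nz_row_sub _.
Lemma e_nz : e != 0. Proof. by rewrite nz_row_eq0 (Y_nz decAB). Qed.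
Lemma w_nz : w != 0. Proof. by rewrite nz_row_eq0 (Y_nz decAC). Qed.

Local Notation uu := (u A e).
Local Notation om := (u A w).

Definition t m := coord A e w m.

Lemma t_big m : (d < m)%N -> t m = 0.
Proof. by move=> h; rewrite /t /coord ltnNge h. Qed.

Lemma w_exp : w = \sum_(m < n) t m *: uu m.
Proof. exact: (coordE decAB lowAB e_sub e_nz). Qed.

Lemma om_exp k : om k = \sum_(m < n) t m *: uu (m + k).
Proof.
rewrite {1}/u w_exp mulmx_suml; apply: eq_bigr => i _.
by rewrite -scalemxAl -uD.
Qed.

Definition par k := (odd k == odd d).
Lemma parS k : par k.+1 = ~~ par k.
Proof. by rewrite /par /=; case: (odd k); case: (odd d). Qed.

Definition J : 'M[F]_n := \sum_(j < n | ~~ odd j) projE VAB j.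

Lemma Jfact k : uu k *m J = if par k then uu k else 0.
Proof.
case: (leqP k d) => hk; last first.
  by rewrite (u_big decAB lowAB e_sub e_nz hk) mul0mx; case: (par k).
set i0 : 'I_n := inord (d - k).
have sub0 : (uu k <= VAB i0)%MS by rewrite (G1 decAB lowAB e_sub e_nz hk).
rewrite /J mulmx_sumr (eq_bigr (fun j => if j == i0 then uu k else 0)); last first.
  move=> j _; case: eqP => [->|/eqP ji]; first by rewrite (projE_id decAB).
  by rewrite (projE_0 decAB sub0) // eq_sym.
have hpar : (~~ odd i0) = par k.
  rewrite /i0 (inordE (leq_subr k d)) oddB // /par.
  by case: (odd k); case: (odd d).
case: (boolP (~~ odd i0)) => h.
  rewrite (bigD1 i0) //= eqxx big1 ?addr0 -?hpar ?h // => j /andP [_ /negbTE ->].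
  by [].
rewrite -hpar (negbTE h) big1 // => j hj; case: eqP => // ji.
by rewrite -ji hj in h.
Qed.

Lemma JA : J *m A = A *m (1%:M - J).
Proof. exact: (uJ_gen decAB lowAB e_sub e_nz parS Jfact). Qed.

Lemma JB : J *m B = B *m (1%:M - J).
Proof. exact: (uJR decAB lowAB e_sub e_nz raiAB parS Jfact). Qed.

Definition tbip := forall m, odd m -> t m = 0.

Lemma omJ : tbip -> forall k, om k *m J = if par k then om k else 0.
Proof.
move=> tb k; rewrite om_exp mulmx_suml.
rewrite (eq_bigr (fun m : 'I_n => if par k then t m *: uu (m + k) else 0)).
  by case: (par k) => //; rewrite big1.
move=> m _; rewrite -scalemxAl Jfact.
case: (boolP (odd m)) => hm; first by rewrite tb // !scale0r; case: (par k).
have -> : par (m + k) = par k by rewrite /par oddD (negbTE hm).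
by case: (par k); rewrite ?scaler0.
Qed.

Lemma JC : tbip -> J *m C = C *m (1%:M - J).
Proof. move=> tb; exact: (uJR decAC lowAC w_sub w_nz raiAC parS (omJ tb)). Qed.

Lemma tbip_bip : tbip -> bipartite A B C.
Proof.
move=> tb Vs Vs' Vs'' h1 h2 h3 i; split.
- apply: (trace_zero h1.1 (P := J) (pb := fun j => odd j)); last exact: (JC tb).
  apply: (pure_prop (b := false) h1.2.2.1 JB).
  have := kerA_mx decAB lowAB e_sub e_nz h1.2.1.2.
  case/submxP => D ->; rewrite -mulmxA Jfact /par eqxx //.
- apply: (trace_zero h2.1 (P := J) (pb := fun j => odd d (+) odd j)); last exact: JA.
  apply: (pure_prop (b := odd d) h2.2.2.1 (JC tb)).
  have := kerR_mx decAB lowAB e_sub e_nz raiAB h2.2.1.2.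
  case/submxP => D ->; rewrite -mulmxA Jfact /par /=.
  by case: (odd d); rewrite ?mulmx0.
- apply: (trace_zero h3.1 (P := J) (pb := fun j => odd d (+) odd j)); last exact: JB.
  apply: (pure_prop (b := odd d) h3.2.2.1 JA).
  have := kerR_mx decAC lowAC w_sub w_nz raiAC h3.2.1.2.
  case/submxP => D ->; rewrite -mulmxA (omJ tb) /par /=.
  by case: (odd d); rewrite ?mulmx0.
Qed.

Lemma sum0 (G : nat -> 'rV[F]_n) :
  (forall m, (0 < m)%N -> G m = 0) -> \sum_(m < n) G m = G 0%N.
Proof.
move=> h; rewrite big_ord_recl big1 ?addr0 // => i _; apply: h.
by rewrite lift0.
Qed.

Lemma sum01 (G : nat -> 'rV[F]_n) : (0 < d)%N ->
  (forall m, (1 < m)%N -> G m = 0) -> \sum_(m < n) G m = G 0%N + G 1%N.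
Proof.
move=> hd h.
have h1 : (1 < n)%N by lia.
rewrite (bigD1 ord0) //= (bigD1 (Ordinal h1)) //= big1 ?addr0 // => i.
move=> /andP [hi0 hi1]; apply: h.
have : (i : nat) != 0%N by [].
have : (i : nat) != 1%N by [].
lia.
Qed.

Lemma om_d : om d = t 0 *: uu d.
Proof.
rewrite om_exp (sum0 (G := fun m => t m *: uu (m + d))) ?add0n // => m hm.
by rewrite (u_big decAB lowAB e_sub e_nz) ?scaler0 //; lia.
Qed.

Lemma t0_nz : t 0 != 0.
Proof.
apply/eqP => h; have := u_nz decAC lowAC w_sub w_nz (leqnn d).
by rewrite om_d h scale0r eqxx.
Qed.

Lemma om_dm1 : (0 < d)%N -> om d.-1 = t 0 *: uu d.-1 + t 1 *: uu d.
Proof.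
move=> hd; rewrite om_exp (sum01 (G := fun m => t m *: uu (m + d.-1))) //; last first.
  by move=> m hm; rewrite (u_big decAB lowAB e_sub e_nz) ?scaler0 //; lia.
by rewrite add0n add1n prednK.
Qed.

Definition psi := rr decAC lowAC w_sub w_nz raiAC d.
Lemma psiP : (0 < d)%N -> psi != 0 /\ om d *m C = psi *: om d.-1.
Proof. by move=> hd; apply: (rrP decAC lowAC w_sub w_nz raiAC); lia. Qed.

Lemma bip_t1 : (0 < d)%N -> bipartite A B C -> t 1 = 0.
Proof.
move=> hd bip.
case: trip => _ [_ [[Vs' h2] [_ [[Vs'' h3] _]]]].
have [htr _ _] := bip VAB Vs' Vs'' hAB h2 h3 ord0.
have ud0 : (uu d <= VAB ord0)%MS.
  rewrite (G1 decAB lowAB e_sub e_nz (leqnn d)) subnn.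
  have -> : (inord 0 : 'I_n) = ord0 by apply/val_inj; rewrite /= inordK.
  by [].
have udnz := u_nz decAB lowAB e_sub e_nz (leqnn d).
have [psinz hpsi] := psiP hd.
have E : uu d *m C *m projE VAB ord0 = ((t 0)^-1 * psi * t 1) *: uu d.
  have Eud : uu d = (t 0)^-1 *: om d by rewrite om_d scalerA mulVf ?t0_nz ?scale1r.
  rewrite {1}Eud -!scalemxAl hpsi om_dm1 // -!scalemxAl mulmxDl -!scalemxAl.
  rewrite (projE_id decAB ud0).
  rewrite (projE_0 decAB (j := inord 1)); last 2 first.
  - have hk : (d.-1 <= d)%N by lia.
    rewrite (G1 decAB lowAB e_sub e_nz hk).
    by have -> : (d - d.-1)%N = 1%N by lia.
  - by apply/eqP => /(congr1 val); rewrite /= inordK //; lia.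
  by rewrite scaler0 add0r !scalerA.
have := trace_lem decAB udnz ud0 E; rewrite htr => /esym/eqP.
by rewrite !mulf_eq0 invr_eq0 (negbTE t0_nz) (negbTE psinz) /= => /eqP.
Qed.

Definition bb := rr decAB lowAB e_sub e_nz raiAB.
Definition cc := rr decAC lowAC w_sub w_nz raiAC.

Lemma t1_rec : t 1 = 0 -> tbip /\ ((0 < d)%N -> t 2 != 0).
Proof.
move=> t10.
case: (posnP d) => [d0|hd].
  split=> [m hm|]; last by [].
  by apply: t_big; rewrite d0; case: m hm.
case: trip => _ [_ [_ [[Y [decY [lowY raiY]]] _]]].
have Y0w : (Y ord0 <= w)%MS.
  have := kerR_mx decAC lowAC w_sub w_nz raiAC lowY.2.
  by rewrite /u expr0 mulmx1.
have EY0 : (Y ord0 :=: w)%MS.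
  apply/eqmxP; rewrite -(mxrank_leqif_eq Y0w) rank_rV w_nz.
  by case: decY => ->.
have h0d : ((ord0 : 'I_n) < d)%N by [].
have E1 := raiY.1 _ h0d; move/eqmxP: E1 => E1.
set i1 : 'I_n := inord (ord0 : 'I_n).+1 in E1.
have EwB : (w *m B :=: Y i1)%MS := eqmx_trans (eqmxMr B (eqmx_sym EY0)) E1.
have hi1 : (0 < i1)%N by rewrite /i1 inordK //=; lia.
have E2 := lowY.1 _ hi1; move/eqmxP: E2 => E2.
have Ei1 : (inord i1.-1 : 'I_n) = ord0 by apply/val_inj; rewrite /= /i1 !inordK //=; lia.
rewrite Ei1 in E2.
have EwBC : (w *m B *m C :=: w)%MS :=
  eqmx_trans (eqmx_trans (eqmxMr C EwB) E2) EY0.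
have wBnz : w *m B != 0.
  by rewrite -mxrank_eq0 EwB; case: decY => ->.
have : (w *m B *m C <= w)%MS by rewrite EwBC.
case/sub_rVP => a ha.
set z := w *m B.
set c := coord A w z.
have zE : z = \sum_(m < n) c m *: om m := coordE decAC lowAC w_sub w_nz z.
have hcz : forall m, (1 < m)%N -> c m = 0.
  move=> m hm; case: (leqP m d) => hmd; last by rewrite /c /coord ltnNge hmd.
  move: ha; rewrite -/z {1}zE (raise_coord decAC lowAC w_sub w_nz raiAC).
  have -> : a *: w = \sum_(m < n) (if (m : nat) == 0%N then a else 0) *: om m.
    rewrite (sum0 (G := fun m => (if m == 0%N then a else 0) *: om m)) /=.
      by rewrite /u expr0 mulmx1.
    by move=> k hk; rewrite (negbTE (lt0n_neq0 hk)) scale0r.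
  move/(L0eq decAC lowAC w_sub w_nz
     (c := fun m => if (m < d)%N then c m.+1 * cc m.+1 else 0)
     (c' := fun m => if m == 0%N then a else 0)) => H.
  have := H m.-1; rewrite (_ : (m.-1 < n)%N); last by lia.
  rewrite (_ : (m.-1 < d)%N); last by lia.
  rewrite (_ : (m.-1 == 0%N) = false); last by apply/negbTE; lia.
  rewrite prednK; last by lia.
  move=> /(_ isT) /eqP; rewrite mulf_eq0 => /orP [/eqP //|].
  have hm' : (0 < m <= d)%N by lia.
  by rewrite (negbTE (rrP decAC lowAC w_sub w_nz raiAC hm').1).
have z01 : z = c 0%N *: om 0 + c 1%N *: om 1.
  rewrite {1}zE (sum01 (G := fun m => c m *: om m)) //.
  by move=> m hm; rewrite hcz ?scale0r.
have Hu : forall m, (m < n)%N ->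
    (if (m < d)%N then t m.+1 * bb m.+1 else 0) =
    c 0%N * t m + c 1%N * (if m is m'.+1 then t m' else 0).
  apply: (L0eq decAB lowAB e_sub e_nz
     (c := fun m => if (m < d)%N then t m.+1 * bb m.+1 else 0)
     (c' := fun m => c 0%N * t m + c 1%N * (if m is m'.+1 then t m' else 0))).
  rewrite -(raise_coord decAB lowAB e_sub e_nz raiAB) -w_exp -/z z01.
  rewrite !om_exp.
  rewrite (eq_bigr (fun m : 'I_n => t m *: uu m)); last by move=> i _; rewrite addn0.
  rewrite [in c 1%N *: _](eq_bigr (fun m : 'I_n => t m *: uu m.+1)); last first.
    by move=> i _; rewrite addn1.
  rewrite (shift1 decAB lowAB e_sub e_nz) !scaler_sumr -big_split /=; apply: eq_bigr => i _.
  by rewrite !scalerA -scalerDl.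
have c00 : c 0%N = 0.
  have := Hu 0%N isT; rewrite hd t10 mul0r /= mulr0 addr0 => /esym/eqP.
  by rewrite mulf_eq0 (negbTE t0_nz) orbF => /eqP.
split.
  have odd_ind : forall k, t k.*2.+1 = 0.
    elim=> [//|k IH].
    case: (ltnP k.*2.+2 d) => hk; last by rewrite t_big //; rewrite doubleS; lia.
    have := Hu k.*2.+2; rewrite (_ : (k.*2.+2 < n)%N); last by lia.
    rewrite hk /= IH c00 !mul0r mulr0 add0r => /(_ isT) /eqP.
    rewrite mulf_eq0 => /orP [/eqP|]; first by rewrite doubleS.
    have hm' : (0 < k.*2.+3 <= d)%N by lia.
    by rewrite (negbTE (rrP decAB lowAB e_sub e_nz raiAB hm').1).
  move=> m hm; have E := odd_double_half m; rewrite hm add1n in E.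
  by rewrite -E odd_ind.
move=> _; apply/eqP => t20.
have := Hu 1%N; rewrite (_ : (1 < n)%N); last by lia.
have -> : (if (1 < d)%N then t 2 * bb 2 else 0) = 0 by case: ifP; rewrite ?t20 ?mul0r.
rewrite c00 mul0r add0r /= => /(_ isT) /esym/eqP.
rewrite mulf_eq0 (negbTE t0_nz) orbF => /eqP c10.
by move: wBnz; rewrite -/z z01 c00 c10 !scale0r addr0 eqxx.
Qed.

Lemma Abar_x (X : 'M[F]_n) : Abar VAB VAC X ->
  exists x : nat -> F, (forall k, uu k *m X = x k *: uu k.+1) /\
    (forall j m, (m + j.+1 <= d)%N -> t m * x (m + j)%N = t m * x j).
Proof.
case=> hX1 hX2.
have h := (G3 decAB lowAB e_sub e_nz X).1 hX1.
have h' : forall k, exists c, uu k *m X == c *: uu k.+1.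
  by move=> k; have [c hc] := h k; exists c; apply/eqP.
exists (fun k => xchoose (h' k)).
have xP : forall k, uu k *m X = xchoose (h' k) *: uu k.+1.
  by move=> k; apply/eqP; exact: xchooseP (h' k).
split=> // j m hm.
set x := fun k => xchoose (h' k).
have [lam hlam] := (G3 decAC lowAC w_sub w_nz X).1 hX2 j.
have H : \sum_(m < n) (t m * x (m + j)%N - lam * t m) *: uu (m + j.+1) = 0.
  rewrite (eq_bigr (fun m : 'I_n => t m *: (uu (m + j) *m X) - lam *: (t m *: uu (m + j.+1)))).
    rewrite sumrB -scaler_sumr -om_exp -hlam om_exp.
    rewrite (mulmx_suml X) -sumrB.
    by rewrite big1 // => i _; rewrite -scalemxAl subrr.
  move=> i _; rewrite xP scalerA scalerA addnS scalerBl; congr (_ - _).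
have L := Ls decAB lowAB e_sub e_nz
  (c := fun m => t m * x (m + j)%N - lam * t m) (s := j.+1) H.
have := L 0%N; rewrite add0n => /(_ (leq_trans (leq_addl _ _) hm)) /eqP.
rewrite subr_eq0 mulrC => /eqP /mulIf => /(_ t0_nz) lamE.
have := L m hm => /eqP; rewrite subr_eq0 => /eqP ->.
by rewrite -lamE mulrC.
Qed.

Lemma span2 (P Q X : 'M[F]_n) :
  (X \in <<[:: P; Q]>>%VS) <-> exists a b, X = a *: P + b *: Q.
Proof.
rewrite span_cons span_seq1; split.
  case/memv_addP => y /vlineP [a ->] [z /vlineP [b ->] ->].
  by exists a, b.
by case=> a [b ->]; apply: memv_add; apply/vlineP; [exists a | exists b].
Qed.

Lemma core1 : t 1 != 0 ->
  free [:: A] /\ (forall X, Abar VAB VAC X <-> X \in <<[:: A]>>%VS).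
Proof.
move=> t1nz.
have hd : (0 < d)%N by case: (posnP d) => // d0; move: t1nz; rewrite t_big ?eqxx // d0.
split.
  rewrite seq1_free; apply/eqP => A0.
  have := u_nz decAB lowAB e_sub e_nz hd.
  by rewrite uS A0 mulmx0 eqxx.
move=> X; rewrite span_seq1; split.
  case/Abar_x => x [hx rel].
  have rel1 : forall j, (j.+2 <= d)%N -> x j.+1 = x j.
    move=> j hj; have := rel j 1%N; rewrite add1n => /(_ hj).
    by move/mulfI => /(_ t1nz).
  have xall : forall k, (k < d)%N -> x k = x 0%N.
    elim=> [//|k IH] hk; rewrite rel1 // IH //; lia.
  apply/vlineP; exists (x 0%N); apply: (G6 decAB lowAB e_sub e_nz) => k hk.
  rewrite hx -scalemxAr -uS.
  case: (ltnP k d) => hkd; first by rewrite xall.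
  by rewrite !(u_big decAB lowAB e_sub e_nz) ?scaler0 //; lia.
case/vlineP => c ->; split.
  by apply/(G3 decAB lowAB e_sub e_nz) => k; exists c; rewrite -scalemxAr -uS.
by apply/(G3 decAC lowAC w_sub w_nz) => k; exists c; rewrite -scalemxAr -uS.
Qed.

Lemma core2 : (0 < d)%N -> t 1 = 0 ->
  free [:: A *m J; J *m A] /\
  (forall X, Abar VAB VAC X <-> X \in <<[:: A *m J; J *m A]>>%VS).
Proof.
move=> hd t10; have [tb t2nz] := t1_rec t10; have {}t2nz := t2nz hd.
have hd2 : (1 < d)%N.
  by case: (ltnP 1 d) => // h; move: t2nz; rewrite t_big ?eqxx //; lia.
have uJ := Jfact.
have oJ := omJ tb.
have ud_nz := u_nz decAB lowAB e_sub e_nz (leqnn d).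
split.
  rewrite free_cons span_seq1 seq1_free; apply/andP; split.
    apply/vlineP => [[k hk]].
    have hdm : (d.-1).+1 = d by rewrite prednK.
    have parm1 : par d.-1 = false.
      by rewrite /par -{2}hdm /=; case: (odd d.-1).
    have := congr1 (mulmx (uu d.-1)) hk.
    rewrite -scalemxAr !mulmxA -uS hdm !uJ parm1 /par eqxx mul0mx scaler0.
    by apply/eqP.
  apply/eqP => JA0.
  have := congr1 (mulmx (uu d.-2)) JA0.
  rewrite mulmx0 mulmxA uJ (_ : par d.-2 = true); last first.
    have hd2' : (d.-2).+2 = d by lia.
    by rewrite /par -{2}hd2' /= negbK eqxx.
  rewrite -uS (_ : d.-2.+1 = d.-1); last by lia.
  by apply/eqP; apply: (u_nz decAB lowAB e_sub e_nz); lia.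
move=> X; rewrite span2; split.
  case/Abar_x => x [hx rel].
  have rel2 : forall j, (j.+3 <= d)%N -> x j.+2 = x j.
    move=> j hj; have := rel j 2%N; rewrite add2n => /(_ hj).
    by move/mulfI => /(_ t2nz).
  set a := x d.-1; set b := x d.-2.
  have Q : forall i, (i < d)%N -> x (d.-1 - i)%N = if odd i then b else a.
    have : forall i, ((i < d)%N -> x (d.-1 - i)%N = if odd i then b else a) /\
             ((i.+1 < d)%N -> x (d.-1 - i.+1)%N = if odd i.+1 then b else a).
      elim=> [|i [IH1 IH2]]; first split=> _; rewrite ?subn0 //=.
        by rewrite subn1.
      split=> // hi.
      rewrite /= negbK -(IH1 (ltn_trans (ltnSn _) (ltn_trans (ltnSn _) hi))).
      rewrite -(rel2 (d.-1 - i.+2)%N); last by lia.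
      by congr x; lia.
    by move=> H i; case: (H i).
  have xE : forall k, (k < d)%N -> x k = if par k then b else a.
    move=> k hk; have := Q (d.-1 - k)%N; rewrite (_ : (d.-1 - (d.-1 - k))%N = k); last by lia.
    move=> ->; last by lia.
    have : odd d = ~~ (odd k (+) odd (d.-1 - k)%N).
      by rewrite -oddD (_ : (k + (d.-1 - k))%N = d.-1) ?(prednK hd) //; [rewrite -{1}(prednK hd) | lia].
    by rewrite /par; case: (odd k); case: (odd (d.-1 - k)%N); case: (odd d).
  exists a, b; apply: (G6 decAB lowAB e_sub e_nz) => k hk.
  rewrite hx (uJAB a b parS uJ).
  case: (ltnP k d) => hkd; first by rewrite xE.
  by rewrite !(u_big decAB lowAB e_sub e_nz) ?scaler0 //; lia.
case=> a [b ->]; split.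
  apply/(G3 decAB lowAB e_sub e_nz) => k; eexists.
  exact: (uJAB a b parS uJ).
apply/(G3 decAC lowAC w_sub w_nz) => k; eexists.
exact: (uJAB a b parS oJ).
Qed.
End Main.

Theorem theorem20p3 (F : fieldType) (d : nat) (A B C : 'M[F]_d.+1)
  (VAB VAC : 'I_d.+1 -> 'M[F]_d.+1) :
  LR_triple A B C -> is_LRdec VAB A B -> is_LRdec VAC A C ->
  [/\ (d = 0%N -> forall X, Abar VAB VAC X <-> X = 0),
      (~ bipartite A B C ->
         free [:: A] /\ (forall X, Abar VAB VAC X <-> X \in <<[:: A]>>%VS))
    & (bipartite A B C -> (0 < d)%N ->
         let J := \sum_(j < d.+1 | ~~ odd j) projE VAB j in
         free [:: A *m J; J *m A] /\
         (forall X, Abar VAB VAC X <-> X \in <<[:: A *m J; J *m A]>>%VS))].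
Proof.
move=> trip hAB hAC; split.
- move=> d0 X; subst d; split.
    case=> [[_ h0] _].
    have : (1%:M <= VAB ord0)%MS.
      by case: hAB => [[_ [_ hs]] _]; rewrite -hs big_ord1.
    case/submxP => D hD.
    by rewrite -[X]mul1mx hD -mulmxA h0 mulmx0.
  move=> ->; split; split; try (by move=> i _; rewrite mulmx0 sub0mx);
    by rewrite mulmx0.
- move=> nb; apply: (core1 hAB hAC); apply/eqP => t10.
  by apply: nb; apply: (tbip_bip hAB hAC); case: (t1_rec trip hAB hAC t10).
- move=> bip hd /=.
  exact: (core2 trip hAB hAC hd (bip_t1 trip hAB hAC hd bip)).
Qed.
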